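(* For positive integers $j,k,m,n$ (with all complete graphs and paths below of order at least $2$ and all cycles of length at least $3$), the following hold: 1. $C_{cc}(K_m\boxtimes K_n)=C_{cc}(K_m\circ K_n)=1$. 2. $C_{cc}(K_m\boxtimes C_n)=C_{cc}(K_m\circ C_n)=\lfloor n/2\rfloor$. 3. $C_{cc}(K_m\boxtimes P_n)=C_{cc}(K_m\circ P_n)=\lceil n/2\rceil$. 4. $C_{cc}(C_m\circ C_n)=\lfloor m/2\rfloor\lfloor n/2\rfloor$. 5. $C_{cc}(C_{2j}\boxtimes C_n)=j\lfloor n/2\rfloor$. 6. $C_{cc}(C_{2j+1}\boxtimes C_{2k+1})=jk+\lfloor k/2\rfloor$, when $j\geq k$. 7. $C_{cc}(C_m\boxtimes P_n)=C_{cc}(C_m\circ P_n)=\lfloor m/2\rfloor\lceil n/2\rceil$. 8. $C_{cc}(P_m\boxtimes P_n)=C_{cc}(P_m\circ P_n)=\lceil m/2\rceil\lceil n/2\rceil$.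
   Context: All graphs are finite, simple and undirected. $K_\ell$, $C_\ell$, $P_\ell$ denote the complete graph, cycle and path on $\ell$ vertices. For a graph $G$ and $S\subseteq V(G)$, the cycle interval $\langle S\rangle$ consists of the vertices of $S$ together with every vertex $w\in V(G)\setminus S$ such that $G[S\cup\{w\}]$ contains a cycle through $w$; $S$ is cycle convex if $\langle S\rangle=S$. The cycle convexity number $C_{cc}(G)$ is the maximum cardinality of a proper (i.e. $\neq V(G)$) cycle convex subset of $V(G)$. The strong product $G\boxtimes H$ has vertex set $V(G)\times V(H)$ with $(g_1,h_1)\sim(g_2,h_2)$ iff ($g_1\sim g_2$, $h_1=h_2$) or ($g_1=g_2$, $h_1\sim h_2$) or ($g_1\sim g_2$, $h_1\sim h_2$). The lexicographic product $G\circ H$ has vertex set $V(G)\times V(H)$ with $(g_1,h_1)\sim(g_2,h_2)$ iff $g_1\sim g_2$, or ($g_1=g_2$ and $h_1\sim h_2$). *)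

(* Defs.v *)
From mathcomp Require Import all_boot.
Set Implicit Arguments. Unset Strict Implicit. Unset Printing Implicit Defensive.

(* A simple graph on a finite type T is given by its adjacency relation e
   (symmetric, irreflexive for the graphs used below). *)

Definition Kg (n : nat) : rel 'I_n := fun x y => x != y.
Definition Pg (n : nat) : rel 'I_n :=
  fun x y => (x.+1 == y :> nat) || (y.+1 == x :> nat).
Definition Cg (n : nat) : rel 'I_n :=
  fun x y => (x != y) && ((x.+1 %% n == y :> nat) || (y.+1 %% n == x :> nat)).

Definition strongP (T1 T2 : finType) (e1 : rel T1) (e2 : rel T2) : rel (T1 * T2) :=
  fun x y => [|| e1 x.1 y.1 && (x.2 == y.2),
                 (x.1 == y.1) && e2 x.2 y.2
               | e1 x.1 y.1 && e2 x.2 y.2].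
Definition lexP (T1 T2 : finType) (e1 : rel T1) (e2 : rel T2) : rel (T1 * T2) :=
  fun x y => e1 x.1 y.1 || ((x.1 == y.1) && e2 x.2 y.2).

(* The induced subgraph G[A] contains a cycle through w: a sequence of
   pairwise distinct vertices of A, of length >= 3, containing w, consecutive
   (cyclically) adjacent.  Such a sequence has length <= #|T|. *)
Definition cycle_through (T : finType) (e : rel T) (A : {set T}) (w : T) : bool :=
  [exists n : 'I_#|T|.+1, [exists t : n.-tuple T,
     [&& w \in (t : seq T), uniq t, 2 < n, all (fun v => v \in A) t & cycle e t]]].

Definition cycle_interval (T : finType) (e : rel T) (S : {set T}) : {set T} :=
  S :|: [set w | (w \notin S) && cycle_through e (w |: S) w].

Definition cycle_convex (T : finType) (e : rel T) (S : {set T}) : bool :=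
  cycle_interval e S == S.

Definition Ccc (T : finType) (e : rel T) : nat :=
  \max_(S : {set T} | (S != [set: T]) && cycle_convex e S) #|S|.

Arguments Kg n : clear implicits.
Arguments Pg n : clear implicits.
Arguments Cg n : clear implicits.

(* Main.v *)
Require Import Defs.
From mathcomp Require Import all_boot.
From mathcomp Require Import zify.
Set Implicit Arguments. Unset Strict Implicit. Unset Printing Implicit Defensive.


Definition indep (T : finType) (e : rel T) (S : {set T}) : bool :=
  [forall x in S, forall y in S, ~~ e x y].

Definition alpha (T : finType) (e : rel T) : nat :=
  \max_(S : {set T} | indep e S) #|S|.

Definition tri_closed (T : finType) (e : rel T) (S : {set T}) :=
  forall u v w, u \in S -> v \in S -> e u v -> e w u -> e w v -> w \in S.

Lemma indepP (T : finType) (e : rel T) (S : {set T}) :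
  reflect (forall x y, x \in S -> y \in S -> ~~ e x y) (indep e S).
Proof.
apply: (iffP forallP) => [H x y xS yS | H x].
  by have /implyP/(_ xS)/forallP/(_ y)/implyP/(_ yS) := H x.
by apply/implyP => xS; apply/forallP => y; apply/implyP => yS; apply: H.
Qed.

Lemma alpha_ge (T : finType) (e : rel T) (S : {set T}) : indep e S -> #|S| <= alpha e.
Proof. by move=> h; apply: (@leq_bigmax_cond _ (fun S => indep e S) (fun S => #|S|) S). Qed.

Lemma alpha_le (T : finType) (e : rel T) k :
  (forall S : {set T}, indep e S -> #|S| <= k) -> alpha e <= k.
Proof. by move=> h; apply/bigmax_leqP => S; apply: h. Qed.

Lemma convex_tri (T : finType) (e : rel T) (S : {set T}) :
  symmetric e -> irreflexive e -> cycle_convex e S -> tri_closed e S.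
Proof.
move=> se ie /eqP cv u v w uS vS euv ewu ewv.
case: (boolP (w \in S)) => // wS.
have wu : w != u by apply/eqP => h; move: ewu; rewrite h ie.
have wv : w != v by apply/eqP => h; move: ewv; rewrite h ie.
have uv : u != v by apply/eqP => h; move: euv; rewrite h ie.
have un : uniq [:: w; u; v] by rewrite /= !inE negb_or wu wv uv.
have h3 : 3 < #|T|.+1.
  by rewrite ltnS; move/card_uniqP: un => h; rewrite -[3]/(size [:: w; u; v]) -h max_card.
suff : w \in S by rewrite (negbTE wS).
rewrite -cv /cycle_interval !inE (negbTE wS) /=.
apply/existsP; exists (Ordinal h3); apply/existsP; exists [tuple w; u; v].
rewrite /= !inE eqxx uS vS /= !orbT /= ewu euv (se v w) ewv.
by rewrite negb_or wu wv uv.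
Qed.

Lemma indep_convex (T : finType) (e : rel T) (S : {set T}) :
  symmetric e -> indep e S -> cycle_convex e S.
Proof.
move=> se /indepP ind; apply/eqP; apply/setP => w.
rewrite /cycle_interval !inE.
case: (boolP (w \in S)) => //= wS.
apply/negbTE/negP => /existsP [n /existsP [t /and5P [wt ut n3 allt cyt]]].
have inS : forall x, x \in (t : seq T) -> x != w -> x \in S.
  move=> x xt xw; move/allP: allt => /(_ x xt); rewrite !inE.
  by rewrite (negbTE xw).
have sz : 2 < size t by rewrite size_tuple.
move: wt ut cyt inS sz; case: (tval t) => [|x1 [|x2 [|x3 r]]] //.
move=> wt ut cyt inS _.
have xt : forall y, y \in [:: x1, x2, x3 & r] -> y \in [:: x1, x2, x3 & r] by [].
move: (cyt); rewrite /cycle /= => /andP [e12 /andP [e23 _]].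
move: (cyt); rewrite (cycle_path x1) /= => /andP [elast _].
case: (eqVneq x1 w) => [e1w | n1w].
  have n2 : x2 != w.
    apply/eqP => h; move: ut; rewrite /= e1w h !inE eqxx /=. by [].
  have n3' : x3 != w.
    apply/eqP => h; move: ut; rewrite /= e1w h !inE eqxx /= orbT. by [].
  have i2 : x2 \in [:: x1, x2, x3 & r] by rewrite !inE eqxx orbT.
  have i3 : x3 \in [:: x1, x2, x3 & r] by rewrite !inE eqxx !orbT.
  by move: (ind x2 x3 (inS _ i2 n2) (inS _ i3 n3')); rewrite e23.
case: (eqVneq x2 w) => [e2w | n2w].
  set z := last x3 r.
  have zin : z \in [:: x1, x2, x3 & r].
    by rewrite /z in_cons; apply/orP; right; rewrite in_cons; apply/orP; right; apply: mem_last.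
  have zw : z != w.
    move: ut => /andP [_ /andP [x2n _]].
    apply/eqP => h; move: x2n; rewrite e2w -h /z mem_last. by [].
  have i1 : x1 \in [:: x1, x2, x3 & r] by rewrite !inE eqxx.
  by move: (ind z x1 (inS _ zin zw) (inS _ i1 n1w)); rewrite elast.
have i1 : x1 \in [:: x1, x2, x3 & r] by rewrite !inE eqxx.
have i2 : x2 \in [:: x1, x2, x3 & r] by rewrite !inE eqxx orbT.
by move: (ind x1 x2 (inS _ i1 n1w) (inS _ i2 n2w)); rewrite e12.
Qed.

Theorem Ccc_alpha (T : finType) (e : rel T) :
  symmetric e -> irreflexive e -> (exists u v, e u v) ->
  (forall S, tri_closed e S -> (exists u v, [/\ u \in S, v \in S & e u v]) -> S = setT) ->
  Ccc e = alpha e.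
Proof.
move=> se ie [u0 [v0 e0]] full.
apply/eqP; rewrite eqn_leq; apply/andP; split.
  apply/bigmax_leqP => S /andP [prop cv]; apply: alpha_ge.
  apply/indepP => x y xS yS; apply/negP => exy.
  have := full S (convex_tri se ie cv) (ex_intro _ x (ex_intro _ y (And3 xS yS exy))).
  by move/eqP; rewrite (negbTE prop).
apply/bigmax_leqP => S ind.
apply: (@leq_bigmax_cond _ (fun S => (S != setT) && cycle_convex e S) (fun S => #|S|) S).
rewrite indep_convex // andbT; apply/eqP => h.
by move/indepP: ind => /(_ u0 v0); rewrite h !inE e0 => /(_ isT isT).
Qed.


Definition conn (T : finType) (e : rel T) :=
  forall P : pred T, (exists x, P x) -> (forall x y, e x y -> P x -> P y) -> forall x, P x.

Definition good (T : finType) (e : rel T) :=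
  [/\ symmetric e, irreflexive e, (forall x, exists y, e x y) & conn e].

Section Strong.
Variables (T1 T2 : finType) (e1 : rel T1) (e2 : rel T2).
Hypothesis g1 : good e1.
Hypothesis g2 : good e2.

Lemma strong_sym : symmetric (strongP e1 e2).
Proof.
case: g1 => s1 _ _ _; case: g2 => s2 _ _ _.
by move=> x y; rewrite /strongP s1 s2 (eq_sym x.1) (eq_sym x.2).
Qed.

Lemma strong_irr : irreflexive (strongP e1 e2).
Proof.
case: g1 => _ i1 _ _; case: g2 => _ i2 _ _.
by move=> x; rewrite /strongP i1 i2 /= andbF.
Qed.

Lemma strong_full (S : {set T1 * T2}) : tri_closed (strongP e1 e2) S ->
  (exists u v, [/\ u \in S, v \in S & strongP e1 e2 u v]) -> S = setT.
Proof.
case: g1 => s1 i1 n1 c1; case: g2 => s2 i2 n2 c2.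
move=> tc [[a b] [[a' b'] [uS vS]]].
have vert : forall a b b', (a, b) \in S -> (a, b') \in S -> e2 b b' ->
    forall x, ((x, b) \in S) && ((x, b') \in S).
  move=> a0 b0 b0' h1 h2 eb.
  have eb' : e2 b0' b0 by rewrite s2.
  apply: (c1 (fun x => ((x, b0) \in S) && ((x, b0') \in S))).
    by exists a0; rewrite h1 h2.
  move=> x y exy /andP [hx hx']; have exy' : e1 y x by rewrite s1.
  apply/andP; split; apply: (tc (x, b0) (x, b0')) => //;
  by rewrite /strongP /= ?eqxx ?eb ?eb' ?exy ?exy' /= ?orbT.
have horz : forall a a' b, (a, b) \in S -> (a', b) \in S -> e1 a a' ->
    forall y, ((a, y) \in S) && ((a', y) \in S).
  move=> a0 a0' b0 h1 h2 ea.
  have ea' : e1 a0' a0 by rewrite s1.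
  apply: (c2 (fun y => ((a0, y) \in S) && ((a0', y) \in S))).
    by exists b0; rewrite h1 h2.
  move=> x y exy /andP [hx hx']; have exy' : e2 y x by rewrite s2.
  apply/andP; split; apply: (tc (a0, x) (a0', x)) => //;
  by rewrite /strongP /= ?eqxx ?ea ?ea' ?exy ?exy' /= ?orbT.
have vfull : forall a b b', (a, b) \in S -> (a, b') \in S -> e2 b b' -> S = setT.
  move=> a0 b0 b0' h1 h2 eb; apply/setP => [[x y]]; rewrite inE.
  have [x' ex] := n1 x.
  have /andP [hx _] := vert _ _ _ h1 h2 eb x.
  have /andP [hx' _] := vert _ _ _ h1 h2 eb x'.
  by have /andP [-> _] := horz _ _ _ hx hx' ex y.
rewrite /strongP /= => /orP [/andP [ea /eqP eb] | /orP [/andP [/eqP ea eb] | /andP [ea eb]]].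
- subst b'; have [y ey] := n2 b.
  have /andP [h1 _] := horz _ _ _ uS vS ea b.
  have /andP [h2 _] := horz _ _ _ uS vS ea y.
  exact: vfull h1 h2 ey.
- subst a'; exact: vfull uS vS eb.
- have h : (a, b') \in S.
    have eb' : e2 b' b by rewrite s2.
    apply: (tc (a, b) (a', b')) => //;
    by rewrite /strongP /= ?eqxx ?ea ?eb ?eb' /= ?orbT.
  exact: vfull uS h eb.
Qed.
End Strong.

Section Lex.
Variables (T1 T2 : finType) (e1 : rel T1) (e2 : rel T2).
Hypothesis g1 : good e1.
Hypothesis g2 : good e2.

Lemma lex_sym : symmetric (lexP e1 e2).
Proof.
case: g1 => s1 _ _ _; case: g2 => s2 _ _ _.
by move=> x y; rewrite /lexP s1 s2 (eq_sym x.1).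
Qed.

Lemma lex_irr : irreflexive (lexP e1 e2).
Proof.
case: g1 => _ i1 _ _; case: g2 => _ i2 _ _.
by move=> x; rewrite /lexP i1 i2 /= andbF.
Qed.

Lemma lex_full (S : {set T1 * T2}) : tri_closed (lexP e1 e2) S ->
  (exists u v, [/\ u \in S, v \in S & lexP e1 e2 u v]) -> S = setT.
Proof.
case: g1 => s1 i1 n1 c1; case: g2 => s2 i2 n2 c2.
move=> tc [[a h] [[b k] [uS vS]]].
have step : forall x y, e1 x y -> (forall z, (x, z) \in S) -> forall z, (y, z) \in S.
  move=> x y exy hx z.
  have [h0 [h1 eh]] : exists h0 h1, e2 h0 h1.
    by have [h1 e] := n2 k; exists k, h1.
  have exy' : e1 y x by rewrite s1.
  apply: (tc (x, h0) (x, h1)) => //; by rewrite /lexP /= ?eqxx ?eh ?exy ?exy' /= ?orbT.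
have fib : forall a b h k, e1 a b -> (a, h) \in S -> (b, k) \in S -> forall z, (a, z) \in S.
  move=> a0 b0 h0 k0 eab ha hb.
  apply: (c2 (fun z => (a0, z) \in S)); first by exists h0.
  move=> x y exy hx.
  have exy' : e2 y x by rewrite s2.
  apply: (tc (a0, x) (b0, k0)) => //; by rewrite /lexP /= ?eqxx ?eab ?exy ?exy' /= ?orbT.
have allf : forall a, (forall z, (a, z) \in S) -> S = setT.
  move=> a0 ha.
  have hall : forall x, [forall z, (x, z) \in S].
    apply: (c1 (fun x => [forall z, (x, z) \in S])); first by exists a0; apply/forallP.
    by move=> x0 y0 exy /forallP hx; apply/forallP; apply: step exy hx.
  apply/setP => [[x y]]; rewrite inE.
  by have /forallP -> := hall x.
rewrite /lexP /= => /orP [eab | /andP [/eqP eab ehk]].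
  exact: allf (fib _ _ _ _ eab uS vS).
subst b; have [b eb] := n1 a.
apply: (allf b) => z.
have eb' : e1 b a by rewrite s1.
apply: (tc (a, h) (a, k)) => //; by rewrite /lexP /= ?eqxx ?ehk ?eb ?eb' /= ?orbT.
Qed.
End Lex.


Lemma conn_succ n (e : rel 'I_n) : symmetric e ->
  (forall i (hi : i.+1 < n), e (Ordinal (ltnW hi)) (Ordinal hi)) -> conn e.
Proof.
move=> se hs P [x0 P0] st.
have Q1 : forall d, d <= x0 -> forall hi : x0 - d < n, P (Ordinal hi).
  elim=> [|d IH] hd hi.
    by have -> : Ordinal hi = x0 by apply: val_inj; rewrite /= subn0.
  have hi' : (x0 - d.+1).+1 < n by have := ltn_ord x0; lia.
  have hi2 : x0 - d < n by have := ltn_ord x0; lia.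
  have := IH (ltnW hd) hi2.
  have eq1 : Ordinal hi2 = Ordinal hi' by apply: val_inj => /=; lia.
  have eq2 : Ordinal hi = Ordinal (ltnW hi') by apply: val_inj.
  rewrite eq1 eq2; apply: st; rewrite se; apply: hs.
have Q0 : forall hi : 0 < n, P (Ordinal hi).
  move=> hi; have hx : x0 - x0 < n by rewrite subnn.
  have := Q1 x0 (leqnn _) hx.
  by have -> : Ordinal hx = Ordinal hi by apply: val_inj => /=; rewrite subnn.
have Q2 : forall i (hi : i < n), P (Ordinal hi).
  elim=> [|i IH] hi; first exact: Q0.
  have := IH (ltnW hi).
  apply: st; apply: hs.
by move=> x; have := Q2 x (ltn_ord x); have -> : Ordinal (ltn_ord x) = x by apply: val_inj.
Qed.

Lemma nbr_succ n (e : rel 'I_n) : 1 < n -> symmetric e ->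
  (forall i (hi : i.+1 < n), e (Ordinal (ltnW hi)) (Ordinal hi)) -> forall x, exists y, e x y.
Proof.
move=> n1 se hs x.
case: (ltnP x.+1 n) => hx.
  exists (Ordinal hx); have := hs _ hx.
  by have -> : Ordinal (ltnW hx) = x by apply: val_inj.
have hx' : (x.-1).+1 < n by have := ltn_ord x; lia.
exists (Ordinal (ltnW hx')); rewrite se; have := hs _ hx'.
by have -> : Ordinal hx' = x by apply: val_inj => /=; have := ltn_ord x; lia.
Qed.

Lemma Pg_succ n i (hi : i.+1 < n) : Pg n (Ordinal (ltnW hi)) (Ordinal hi).
Proof. by rewrite /Pg /= eqxx. Qed.

Lemma Cg_succ n i (hi : i.+1 < n) : Cg n (Ordinal (ltnW hi)) (Ordinal hi).
Proof.
rewrite /Cg /= modn_small // eqxx andbT.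
by apply/eqP => /(congr1 val) /= /eqP; rewrite eqn_leq ltnn andbF.
Qed.

Lemma Pg_sym n : symmetric (Pg n).
Proof. by move=> x y; rewrite /Pg orbC. Qed.

Lemma Cg_sym n : symmetric (Cg n).
Proof. by move=> x y; rewrite /Cg orbC eq_sym. Qed.

Lemma good_K n : 1 < n -> good (Kg n).
Proof.
move=> n1; split.
- by move=> x y; rewrite /Kg eq_sym.
- by move=> x; rewrite /Kg eqxx.
- move=> x; have h0 : 0 < n by lia.
  case: (eqVneq (nat_of_ord x) 0) => hx.
    exists (Ordinal n1); rewrite /Kg; apply/eqP => /(congr1 val) /=; lia.
  exists (Ordinal h0); rewrite /Kg; apply/eqP => /(congr1 val) /=; lia.
- move=> P [x0 P0] st x; case: (eqVneq x0 x) => [<- //| h].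
  by apply: st P0.
Qed.

Lemma good_P n : 1 < n -> good (Pg n).
Proof.
move=> n1; split.
- exact: Pg_sym.
- by move=> x; rewrite /Pg; apply/negP => /orP [] /eqP; lia.
- exact: nbr_succ n1 (@Pg_sym n) (@Pg_succ n).
- exact: conn_succ (@Pg_sym n) (@Pg_succ n).
Qed.

Lemma good_C n : 2 < n -> good (Cg n).
Proof.
move=> n2; split.
- exact: Cg_sym.
- by move=> x; rewrite /Cg eqxx.
- by apply: nbr_succ (@Cg_sym n) (@Cg_succ n); lia.
- exact: conn_succ (@Cg_sym n) (@Cg_succ n).
Qed.

Lemma Ccc_strong (T1 T2 : finType) (e1 : rel T1) (e2 : rel T2) (a : T1) (b : T2) :
  good e1 -> good e2 -> Ccc (strongP e1 e2) = alpha (strongP e1 e2).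
Proof.
move=> g1 g2; apply: Ccc_alpha.
- exact: strong_sym.
- exact: strong_irr.
- case: g1 => _ _ n1 _; have [a' ea] := n1 a.
  by exists (a, b), (a', b); rewrite /strongP /= ea eqxx.
- exact: strong_full.
Qed.

Lemma Ccc_lex (T1 T2 : finType) (e1 : rel T1) (e2 : rel T2) (a : T1) (b : T2) :
  good e1 -> good e2 -> Ccc (lexP e1 e2) = alpha (lexP e1 e2).
Proof.
move=> g1 g2; apply: Ccc_alpha.
- exact: lex_sym.
- exact: lex_irr.
- case: g1 => _ _ n1 _; have [a' ea] := n1 a.
  by exists (a, b), (a', b); rewrite /lexP /= ea.
- exact: lex_full.
Qed.


Lemma card_part (T C : finType) (f : T -> C) (I : {set T}) :
  #|I| = \sum_(c : C) #|[set x in I | f x == c]|.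
Proof.
rewrite -sum1_card (partition_big f xpredT) //=.
apply: eq_bigr => c _; rewrite -sum1_card; apply: eq_bigl => x; by rewrite inE.
Qed.

Lemma card_le_sum (T C : finType) (f : T -> C) (I : {set T}) k :
  (forall c, #|[set x in I | f x == c]| <= k) -> #|I| <= #|C| * k.
Proof.
move=> h; rewrite (card_part f) -sum_nat_const.
by apply: leq_sum => c _; apply: h.
Qed.

Section Bounds.
Variables (T1 T2 : finType) (e1 : rel T1) (e2 : rel T2).

Lemma strong_lb (I : {set T1}) (J : {set T2}) :
  indep e1 I -> indep e2 J -> #|I| * #|J| <= alpha (strongP e1 e2).
Proof.
move=> /indepP hI /indepP hJ; rewrite -cardsX; apply: alpha_ge.
apply/indepP => [[a b] [a' b']]; rewrite !inE /= => /andP [aI bJ] /andP [aI' bJ'].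
by rewrite /strongP /= (negbTE (hI _ _ aI aI')) (negbTE (hJ _ _ bJ bJ')) /= andbF.
Qed.

Lemma lex_lb (I : {set T1}) (J : {set T2}) :
  indep e1 I -> indep e2 J -> #|I| * #|J| <= alpha (lexP e1 e2).
Proof.
move=> /indepP hI /indepP hJ; rewrite -cardsX; apply: alpha_ge.
apply/indepP => [[a b] [a' b']]; rewrite !inE /= => /andP [aI bJ] /andP [aI' bJ'].
by rewrite /lexP /= (negbTE (hI _ _ aI aI')) (negbTE (hJ _ _ bJ bJ')) /= andbF.
Qed.

Lemma strong_clique1 (I : {set T1 * T2}) (Q : pred T1) :
  indep (strongP e1 e2) I ->
  (forall a a', Q a -> Q a' -> a = a' \/ e1 a a') ->
  #|[set x in I | Q x.1]| <= alpha e2.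
Proof.
move=> /indepP hI hQ.
set I' := [set x in I | Q x.1].
have inj : {in I' &, injective snd}.
  move=> [a b] [a' b']; rewrite !inE /= => /andP [xI qa] /andP [yI qa'] eb.
  subst b'; case: (hQ _ _ qa qa') => [-> //| ea].
  by have := hI _ _ xI yI; rewrite /strongP /= ea eqxx.
rewrite -(card_in_imset inj); apply: alpha_ge; apply/indepP => h k.
move=> /imsetP [[a b] + ->] /imsetP [[a' b'] + ->]; rewrite !inE /= => /andP [xI qa] /andP [yI qa'].
apply/negP => eb; case: (hQ _ _ qa qa') => [ea | ea].
  by subst a'; have := hI _ _ xI yI; rewrite /strongP /= eqxx eb orbT.
by have := hI _ _ xI yI; rewrite /strongP /= eb ea !orbT.
Qed.

Lemma strong_clique2 (I : {set T1 * T2}) (Q : pred T2) :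
  indep (strongP e1 e2) I ->
  (forall b b', Q b -> Q b' -> b = b' \/ e2 b b') ->
  #|[set x in I | Q x.2]| <= alpha e1.
Proof.
move=> /indepP hI hQ.
set I' := [set x in I | Q x.2].
have inj : {in I' &, injective fst}.
  move=> [a b] [a' b']; rewrite !inE /= => /andP [xI qa] /andP [yI qa'] eb.
  subst a'; case: (hQ _ _ qa qa') => [-> //| ea].
  by have := hI _ _ xI yI; rewrite /strongP /= ea eqxx orbT.
rewrite -(card_in_imset inj); apply: alpha_ge; apply/indepP => h k.
move=> /imsetP [[a b] + ->] /imsetP [[a' b'] + ->]; rewrite !inE /= => /andP [xI qa] /andP [yI qa'].
apply/negP => ea; case: (hQ _ _ qa qa') => [eb | eb].
  by subst b'; have := hI _ _ xI yI; rewrite /strongP /= eqxx ea.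
by have := hI _ _ xI yI; rewrite /strongP /= eb ea !orbT.
Qed.

Lemma strong_cover1 q (pi : T1 -> 'I_q) :
  (forall a a', pi a = pi a' -> a = a' \/ e1 a a') ->
  alpha (strongP e1 e2) <= q * alpha e2.
Proof.
move=> hpi; apply: alpha_le => I hI.
rewrite -(card_ord q). apply: (card_le_sum (f := fun x : T1 * T2 => pi x.1)) => c.
apply: (strong_clique1 (Q := fun a => pi a == c)) => // a a' /eqP h1 /eqP h2.
by apply: hpi; rewrite h1 h2.
Qed.

Lemma strong_cover2 q (pi : T2 -> 'I_q) :
  (forall b b', pi b = pi b' -> b = b' \/ e2 b b') ->
  alpha (strongP e1 e2) <= alpha e1 * q.
Proof.
move=> hpi; apply: alpha_le => I hI.
rewrite mulnC -(card_ord q); apply: (card_le_sum (f := fun x : T1 * T2 => pi x.2)) => c.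
apply: (strong_clique2 (Q := fun b => pi b == c)) => // a a' /eqP h1 /eqP h2.
by apply: hpi; rewrite h1 h2.
Qed.

Lemma lex_ub : alpha (lexP e1 e2) <= alpha e1 * alpha e2.
Proof.
apply: alpha_le => I /indepP hI.
set P := [set x.1 | x in I].
have hP : indep e1 P.
  apply/indepP => a a' /imsetP [x xI ->] /imsetP [y yI ->].
  by apply/negP => ea; have := hI _ _ xI yI; rewrite /lexP ea.
apply: (@leq_trans (#|P| * alpha e2)); last by rewrite leq_mul2r alpha_ge ?orbT.
rewrite (card_part fst) (bigID (fun a => a \in P)) /=.
rewrite [X in _ + X]big1 ?addn0; last first.
  move=> a aP; apply/eqP; rewrite cards_eq0; apply/eqP/setP => x; rewrite !inE.
  apply/negbTE/negP => /andP [xI /eqP xa]; move/negP: aP; apply.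
  by apply/imsetP; exists x.
rewrite -sum_nat_const; apply: leq_sum => a aP.
set I' := [set x in I | x.1 == a].
have inj : {in I' &, injective snd}.
  move=> [a1 b] [a2 b']; rewrite !inE /= => /andP [_ /eqP h1] /andP [_ /eqP h2] eb.
  by rewrite h1 h2 eb.
rewrite -(card_in_imset inj); apply: alpha_ge; apply/indepP => h k.
move=> /imsetP [[a1 b] + ->] /imsetP [[a2 b'] + ->]; rewrite !inE /=.
move=> /andP [xI /eqP h1] /andP [yI /eqP h2]; subst a1 a2.
by apply/negP => eb; have := hI _ _ xI yI; rewrite /lexP /= eqxx eb orbT.
Qed.

End Bounds.

Lemma cover_1d (T : finType) (e : rel T) q (pi : T -> 'I_q) :
  (forall a a', pi a = pi a' -> a = a' \/ e a a') -> alpha e <= q.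
Proof.
move=> hpi; apply: alpha_le => I /indepP hI.
rewrite -(muln1 q) -(card_ord q); apply: (card_le_sum (f := pi)) => c.
apply/card_le1_eqP => x y; rewrite !inE => /andP [xI /eqP h1] /andP [yI /eqP h2].
case: (hpi x y); first by rewrite h1 h2.
  by [].
by move=> exy; have := hI _ _ xI yI; rewrite exy.
Qed.

Lemma dc n (f : 'I_n -> nat) : \sum_i (f i + f (ordS i)) = 2 * \sum_i f i.
Proof.
rewrite big_split /= mul2n -addnn; congr (_ + _).
by rewrite [RHS](reindex_inj (can_inj (@ordSK n))).
Qed.


Lemma Cg_of_succ n (x y : 'I_n) : x.+1 = y :> nat -> Cg n x y.
Proof.
move=> h; rewrite /Cg modn_small; last by rewrite h ltn_ord.
rewrite h eqxx andbT; apply/eqP => /(congr1 val) /=; lia.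
Qed.

Lemma half_lt n (a : 'I_n) : a %/ 2 < (n + 1) %/ 2.
Proof. have := ltn_ord a; lia. Qed.

Definition halfo n (a : 'I_n) : 'I_((n + 1) %/ 2) := Ordinal (half_lt a).

Lemma halfo_P n (a a' : 'I_n) : halfo a = halfo a' -> a = a' \/ Pg n a a'.
Proof.
move=> /(congr1 val) /= h.
case: (eqVneq (nat_of_ord a) a') => [e|ne]; first by left; apply: val_inj.
right; rewrite /Pg; apply/orP; case: (ltngtP a a') => hh; [left; apply/eqP; lia | right; apply/eqP; lia | lia].
Qed.

Lemma halfo_C n (a a' : 'I_n) : halfo a = halfo a' -> a = a' \/ Cg n a a'.
Proof.
move=> /(congr1 val) /= h.
case: (eqVneq (nat_of_ord a) a') => [e|ne]; first by left; apply: val_inj.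
right; case: (ltngtP a a') => hh.
- by apply: Cg_of_succ; lia.
- by rewrite Cg_sym; apply: Cg_of_succ; lia.
- lia.
Qed.

Lemma alpha_K_le n : alpha (Kg n) <= 1.
Proof.
apply: (@cover_1d _ _ 1 (fun _ => ord0)) => a a' _.
by case: (eqVneq a a') => h; [left | right].
Qed.

Lemma alpha_P_le n : alpha (Pg n) <= (n + 1) %/ 2.
Proof. exact: (cover_1d (@halfo_P n)). Qed.

Lemma alpha_C_le n : 2 < n -> alpha (Cg n) <= n %/ 2.
Proof.
move=> n2; apply: alpha_le => I /indepP hI.
suff : 2 * #|I| <= n by lia.
have -> : #|I| = \sum_i ((i \in I) : nat).
  by rewrite -sum1_card big_mkcond.
rewrite -dc; apply: (@leq_trans (\sum_(i : 'I_n) 1)); last by rewrite sum1_card card_ord.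
apply: leq_sum => i _.
case: (boolP (i \in I)) => iI; case: (boolP (ordS i \in I)) => sI //=.
have := hI _ _ iI sI.
have -> // : Cg n i (ordS i).
rewrite /Cg /= ?eqxx ?orbT ?andbT.
apply/eqP => /(congr1 val) /=.
have := ltn_ord i; case: (ltnP i.+1 n) => h1 h2.
  rewrite modn_small //; lia.
have -> : i.+1 = n by lia.
rewrite modnn; lia.
Qed.

Lemma dbl_ltC n (c : 'I_(n %/ 2)) : 2 * c < n.
Proof. have := ltn_ord c; lia. Qed.
Definition dC n (c : 'I_(n %/ 2)) : 'I_n := Ordinal (dbl_ltC c).
Lemma dbl_ltP n (c : 'I_((n + 1) %/ 2)) : 2 * c < n.
Proof. have := ltn_ord c; lia. Qed.
Definition dP n (c : 'I_((n + 1) %/ 2)) : 'I_n := Ordinal (dbl_ltP c).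

Lemma wit_C n : exists S : {set 'I_n}, indep (Cg n) S /\ #|S| = n %/ 2.
Proof.
exists ((@dC n) @: setT); split.
  apply/indepP => x y /imsetP [c _ ->] /imsetP [c' _ ->].
  rewrite /Cg /= !modn_small; try (have := ltn_ord c; have := ltn_ord c'; lia).
rewrite card_imset ?cardsT ?card_ord //.
by move=> c c' /(congr1 val) /= h; apply: val_inj => /=; lia.
Qed.

Lemma wit_P n : exists S : {set 'I_n}, indep (Pg n) S /\ #|S| = (n + 1) %/ 2.
Proof.
exists ((@dP n) @: setT); split.
  apply/indepP => x y /imsetP [c _ ->] /imsetP [c' _ ->].
  rewrite /Pg /=; apply/negP => /orP [] /eqP; lia.
rewrite card_imset ?cardsT ?card_ord //.
by move=> c c' /(congr1 val) /= h; apply: val_inj => /=; lia.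
Qed.

Lemma wit_K n : 0 < n -> exists S : {set 'I_n}, indep (Kg n) S /\ #|S| = 1.
Proof.
move=> n0; exists [set Ordinal n0]; split; last by rewrite cards1.
by apply/indepP => x y; rewrite !inE => /eqP -> /eqP ->; rewrite /Kg eqxx.
Qed.


Lemma Kfib m (a a' : 'I_m) : (fun _ => @ord0 0) a = (fun _ => @ord0 0) a' -> a = a' \/ Kg m a a'.
Proof. by move=> _; case: (eqVneq a a') => h; [left | right]. Qed.

Lemma anti x y : x <= y -> y <= x -> x = y.
Proof. lia. Qed.

Lemma part1 m n : 2 <= m -> 2 <= n ->
  Ccc (strongP (Kg m) (Kg n)) = 1 /\ Ccc (lexP (Kg m) (Kg n)) = 1.
Proof.
move=> hm hn.
have m0 : 0 < m by lia. have n0 : 0 < n by lia.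
have [I [hI cI]] := wit_K m0; have [J [hJ cJ]] := wit_K n0.
split.
  rewrite (Ccc_strong (Ordinal m0) (Ordinal n0) (good_K hm) (good_K hn)).
  apply: anti.
    apply: leq_trans (strong_cover1 _ (@Kfib m)) _; rewrite mul1n; exact: alpha_K_le.
  by have := strong_lb hI hJ; rewrite cI cJ.
rewrite (Ccc_lex (Ordinal m0) (Ordinal n0) (good_K hm) (good_K hn)).
apply: anti.
  apply: leq_trans (lex_ub _ _) _; rewrite -(muln1 1); apply: leq_mul; exact: alpha_K_le.
by have := lex_lb hI hJ; rewrite cI cJ.
Qed.

Lemma part2 m n : 2 <= m -> 3 <= n ->
  Ccc (strongP (Kg m) (Cg n)) = n %/ 2 /\ Ccc (lexP (Kg m) (Cg n)) = n %/ 2.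
Proof.
move=> hm hn.
have m0 : 0 < m by lia. have n0 : 0 < n by lia.
have [I [hI cI]] := wit_K m0; have [J [hJ cJ]] := wit_C n.
split.
  rewrite (Ccc_strong (Ordinal m0) (Ordinal n0) (good_K hm) (good_C hn)).
  apply: anti.
    apply: leq_trans (strong_cover1 _ (@Kfib m)) _; rewrite mul1n; exact: alpha_C_le.
  by have := strong_lb hI hJ; rewrite cI cJ mul1n.
rewrite (Ccc_lex (Ordinal m0) (Ordinal n0) (good_K hm) (good_C hn)).
apply: anti.
  apply: leq_trans (lex_ub _ _) _; rewrite -(mul1n (n %/ 2)); apply: leq_mul.
    exact: alpha_K_le.
  exact: alpha_C_le.
by have := lex_lb hI hJ; rewrite cI cJ mul1n.
Qed.

Lemma part3 m n : 2 <= m -> 2 <= n ->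
  Ccc (strongP (Kg m) (Pg n)) = (n + 1) %/ 2 /\ Ccc (lexP (Kg m) (Pg n)) = (n + 1) %/ 2.
Proof.
move=> hm hn.
have m0 : 0 < m by lia. have n0 : 0 < n by lia.
have [I [hI cI]] := wit_K m0; have [J [hJ cJ]] := wit_P n.
split.
  rewrite (Ccc_strong (Ordinal m0) (Ordinal n0) (good_K hm) (good_P hn)).
  apply: anti.
    apply: leq_trans (strong_cover1 _ (@Kfib m)) _; rewrite mul1n; exact: alpha_P_le.
  by have := strong_lb hI hJ; rewrite cI cJ mul1n.
rewrite (Ccc_lex (Ordinal m0) (Ordinal n0) (good_K hm) (good_P hn)).
apply: anti.
  apply: leq_trans (lex_ub _ _) _; rewrite -(mul1n ((n + 1) %/ 2)); apply: leq_mul.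
    exact: alpha_K_le.
  exact: alpha_P_le.
by have := lex_lb hI hJ; rewrite cI cJ mul1n.
Qed.

Lemma part4 m n : 3 <= m -> 3 <= n ->
  Ccc (lexP (Cg m) (Cg n)) = (m %/ 2) * (n %/ 2).
Proof.
move=> hm hn.
have m0 : 0 < m by lia. have n0 : 0 < n by lia.
have [I [hI cI]] := wit_C m; have [J [hJ cJ]] := wit_C n.
rewrite (Ccc_lex (Ordinal m0) (Ordinal n0) (good_C hm) (good_C hn)).
apply: anti.
  apply: leq_trans (lex_ub _ _) _; apply: leq_mul; exact: alpha_C_le.
by have := lex_lb hI hJ; rewrite cI cJ.
Qed.

Lemma part5 j n : 3 <= 2 * j -> 3 <= n ->
  Ccc (strongP (Cg (2 * j)) (Cg n)) = j * (n %/ 2).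
Proof.
move=> hm hn.
have m0 : 0 < 2 * j by lia. have n0 : 0 < n by lia.
have [I [hI cI]] := wit_C (2 * j); have [J [hJ cJ]] := wit_C n.
rewrite (Ccc_strong (Ordinal m0) (Ordinal n0) (good_C hm) (good_C hn)).
have hj : (2 * j + 1) %/ 2 = j by lia.
have hj' : (2 * j) %/ 2 = j by lia.
apply: anti.
  apply: leq_trans (strong_cover1 _ (@halfo_C (2 * j))) _; rewrite hj leq_mul2l.
  by rewrite alpha_C_le ?orbT.
by have := strong_lb hI hJ; rewrite cI cJ hj'.
Qed.

Lemma part7 m n : 3 <= m -> 2 <= n ->
  Ccc (strongP (Cg m) (Pg n)) = (m %/ 2) * ((n + 1) %/ 2) /\
  Ccc (lexP (Cg m) (Pg n)) = (m %/ 2) * ((n + 1) %/ 2).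
Proof.
move=> hm hn.
have m0 : 0 < m by lia. have n0 : 0 < n by lia.
have [I [hI cI]] := wit_C m; have [J [hJ cJ]] := wit_P n.
split.
  rewrite (Ccc_strong (Ordinal m0) (Ordinal n0) (good_C hm) (good_P hn)).
  apply: anti.
    apply: leq_trans (strong_cover2 _ (@halfo_P n)) _; rewrite leq_mul2r.
    by rewrite alpha_C_le ?orbT.
  by have := strong_lb hI hJ; rewrite cI cJ.
rewrite (Ccc_lex (Ordinal m0) (Ordinal n0) (good_C hm) (good_P hn)).
apply: anti.
  apply: leq_trans (lex_ub _ _) _; apply: leq_mul; [exact: alpha_C_le | exact: alpha_P_le].
by have := lex_lb hI hJ; rewrite cI cJ.
Qed.

Lemma part8 m n : 2 <= m -> 2 <= n ->
  Ccc (strongP (Pg m) (Pg n)) = ((m + 1) %/ 2) * ((n + 1) %/ 2) /\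
  Ccc (lexP (Pg m) (Pg n)) = ((m + 1) %/ 2) * ((n + 1) %/ 2).
Proof.
move=> hm hn.
have m0 : 0 < m by lia. have n0 : 0 < n by lia.
have [I [hI cI]] := wit_P m; have [J [hJ cJ]] := wit_P n.
split.
  rewrite (Ccc_strong (Ordinal m0) (Ordinal n0) (good_P hm) (good_P hn)).
  apply: anti.
    apply: leq_trans (strong_cover1 _ (@halfo_P m)) _; rewrite leq_mul2l.
    by rewrite alpha_P_le ?orbT.
  by have := strong_lb hI hJ; rewrite cI cJ.
rewrite (Ccc_lex (Ordinal m0) (Ordinal n0) (good_P hm) (good_P hn)).
apply: anti.
  apply: leq_trans (lex_ub _ _) _; apply: leq_mul; exact: alpha_P_le.
by have := lex_lb hI hJ; rewrite cI cJ.
Qed.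


Definition nearv m (x y : nat) := [\/ x = y, x.+1 %% m = y | y.+1 %% m = x].

Lemma near_of_strong n1 n2 (x y : 'I_n1 * 'I_n2) :
  (x == y) || strongP (Cg n1) (Cg n2) x y -> nearv n1 x.1 y.1 /\ nearv n2 x.2 y.2.
Proof.
have hC : forall n (u v : 'I_n), (u == v) || Cg n u v -> nearv n u v.
  move=> n u v /orP [/eqP -> | /andP [_ /orP [/eqP h | /eqP h]]].
  - by apply: Or31.
  - by apply: Or32.
  - by apply: Or33.
case: x y => [x1 x2] [y1 y2]; rewrite /strongP /=.
move=> /orP [/eqP [-> ->] | /or3P [/andP [h /eqP ->] | /andP [/eqP -> h] | /andP [h h']]].
- by split; apply: hC; rewrite eqxx.
- by split; apply: hC; rewrite ?h ?eqxx ?orbT.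
- by split; apply: hC; rewrite ?h ?eqxx ?orbT.
- by split; apply: hC; rewrite ?h ?h' ?orbT.
Qed.

Lemma near_mod m u d : 2 < m -> nearv m (u %% m) ((u + d) %% m) ->
  [\/ d %% m = 0, d %% m = 1 | d %% m = m.-1].
Proof.
move=> m2 [h | h | h].
- apply: Or31; apply/eqP; rewrite eq_sym.
  have : (u + 0 == u + d %[mod m]) by rewrite addn0 h.
  by rewrite eqn_modDl mod0n.
- apply: Or32.
  have : (u + 1 == u + d %[mod m]) by rewrite -modnDml addn1 h.
  by rewrite eqn_modDl (modn_small (_ : 1 < m)) ?(ltn_trans _ m2) // => /eqP.
- apply: Or33.
  have h1 : (d + 1 == 0 %[mod m]).
    have : (u + (d + 1) == u + 0 %[mod m]) by rewrite addn0 addnA -modnDml addn1 h.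
    by rewrite eqn_modDl.
  move: h1; rewrite mod0n -modnDml => /eqP.
  have := ltn_pmod d (ltn_trans (isT : 0 < 2) m2).
  move: (d %% m) => r hr.
  case: (ltnP (r + 1) m) => hh; first by rewrite modn_small //; lia.
  lia.
Qed.

Lemma succ_mod r x : x < r -> x.+1 %% r = if x.+1 == r then 0 else x.+1.
Proof.
move=> h; case: eqP => [-> | ne]; first by rewrite modnn.
by rewrite modn_small //; lia.
Qed.

Section Part6.
Variables j k : nat.
Hypothesis k1 : 1 <= k.
Hypothesis kj : k <= j.

Let m := 2 * j + 1.
Let h := k %/ 2.
Let T := j * k + h.

Definition rowf (t : nat) := 2 * (t %/ j) + (j - h <= t %% j).

Lemma j0 : 0 < j. Proof. lia. Qed.

Lemma divmod t : t = t %/ j * j + t %% j /\ t %% j < j.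
Proof. by split; [apply: divn_eq | apply: ltn_pmod; apply: j0]. Qed.

Lemma row_lt_nat (t : nat) : t < j * k + k %/ 2 -> rowf t < 2 * k + 1.
Proof.
rewrite /rowf => tT; have [e r] := divmod t.
move: e r tT; move: (t %/ j) (t %% j) => Q R e r tT.
have hQ : Q <= k.
  rewrite leqNgt; apply/negP => hq.
  have : (k + 1) * j <= Q * j by apply: leq_mul; lia.
  rewrite mulnDl mul1n (mulnC k); lia.
case: (eqVneq Q k) => hq.
  subst Q; have : R < k %/ 2 by rewrite (mulnC k) in e; lia.
  lia.
lia.
Qed.

Lemma row_lt (t : 'I_T) : rowf t < 2 * k + 1.
Proof. exact: (row_lt_nat (ltn_ord t)). Qed.

Lemma col_lt (t : 'I_T) : (2 * t) %% m < 2 * j + 1.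
Proof. by rewrite /m ltn_pmod // addn1. Qed.

Definition pt (t : 'I_T) : 'I_(2 * j + 1) * 'I_(2 * k + 1) :=
  (Ordinal (col_lt t), Ordinal (row_lt t)).

Lemma core (t t' : nat) : t < t' -> t' < T ->
  nearv (2 * k + 1) (rowf t) (rowf t') -> nearv m ((2 * t) %% m) ((2 * t') %% m) -> False.
Proof.
move=> tt' t'T hr hc.
have rlt : forall u, u < T -> rowf u < 2 * k + 1.
  by move=> u uT; apply: (row_lt (Ordinal uT)).
have rt := rlt _ (ltn_trans tt' t'T); have rt' := rlt _ t'T.
have [e r] := divmod t; have [e' r'] := divmod t'.
have QQ : t %/ j <= t' %/ j by apply: leq_div2r; lia.
have hd : 2 * t' = 2 * t + 2 * (t' - t) by lia.
have m2 : 2 < m by rewrite /m; lia.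
rewrite hd in hc; have := near_mod m2 hc.
clear m2; move: hr hc QQ e e' r r' rt rt' t'T; rewrite /rowf /T /h /m.
move: (t %/ j) (t %% j) (t' %/ j) (t' %% j) => Q R Q' R'.
move=> hr hc QQ e e' r r' rt rt' t'T.
rewrite /nearv !succ_mod // in hr.
set b := 2 * Q + _ in hr rt; set b' := 2 * Q' + _ in hr rt'.
have bb : b <= b'.
  rewrite /b /b'; case: (ltnP Q Q') => hq; first lia.
  have eq : Q' = Q by lia.
  subst Q'; lia.
have [close | wrap] : b' <= b + 1 \/ (b = 0 /\ b' = 2 * k).
- case: hr => [H | | ]; first by left; lia.
  + case: eqP => H1 H2; [right; lia | left; lia].
  + case: eqP => H1 H2; [right; lia | left; lia].
-
  have dl : t' - t < j.
    have [qe | qs] : Q' = Q \/ (Q' = Q.+1 /\ j - k %/ 2 <= R /\ R' < j - k %/ 2).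
      rewrite /b /b' in bb close.
      case: (leqP (j - k %/ 2) R); case: (leqP (j - k %/ 2) R') => /= H1 H2; lia.
      subst Q'; lia.
    case: qs => qs [H1 H2]; subst Q'; rewrite mulSn in e'; lia.
  have dm : (2 * (t' - t)) %% (2 * j + 1) = 2 * (t' - t) by rewrite modn_small; lia.
  rewrite dm => -[]; lia.
-
  case: wrap => hb hb'.
  have hQ : Q = 0 by rewrite /b in hb; lia.
  have hQ' : Q' = k by rewrite /b' in hb'; case: (leqP (j - k %/ 2) R') hb'; lia.
  have hR : R < j - k %/ 2 by rewrite /b in hb; case: (leqP (j - k %/ 2) R) hb; lia.
  subst Q Q'.
  have hR' : R' < k %/ 2 by nia.
  have hk : (k - 1) * (2 * j + 1) + (2 * j + 1) = 2 * (k * j) + k.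
    rewrite -mulSnr; have -> : (k - 1).+1 = k by lia.
    by rewrite mulnDr muln1 mulnCA.
  set rr := 2 * j + 1 + 2 * R' - 2 * t - k.
  have hd2 : 2 * (t' - t) = (k - 1) * (2 * j + 1) + rr by rewrite /rr; lia.
  have dm : (2 * (t' - t)) %% (2 * j + 1) = rr.
    by rewrite hd2 modnMDl modn_small // /rr; lia.
  rewrite dm /rr => -[]; lia.
Qed.

Lemma pt_inj_indep (t t' : 'I_T) : t != t' ->
  ~~ ((pt t == pt t') || strongP (Cg (2 * j + 1)) (Cg (2 * k + 1)) (pt t) (pt t')).
Proof.
move=> ne; apply/negP => H.
have g1 : good (Cg (2 * j + 1)) by apply: good_C; lia.
have g2 : good (Cg (2 * k + 1)) by apply: good_C; lia.
have sS := strong_sym g1 g2.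
wlog lt : t t' ne H / t < t'.
  move=> W; case: (ltngtP t t') => hh.
  - exact: W ne H hh.
  - apply: (W t' t) => //; first by rewrite eq_sym.
    by rewrite eq_sym sS.
  - by move/eqP: ne; apply; apply: val_inj.
have [H1 H2] := near_of_strong H.
exact: (core lt (ltn_ord t') H2 H1).
Qed.

Lemma part6_lb : T <= alpha (strongP (Cg (2 * j + 1)) (Cg (2 * k + 1))).
Proof.
have inj : injective pt.
  move=> t t' e; apply/eqP; apply/negP => /negP ne.
  by have := pt_inj_indep ne; rewrite e eqxx.
have <- : #|pt @: setT| = T by rewrite card_imset // cardsT card_ord.
apply: alpha_ge; apply/indepP => x y /imsetP [t _ ->] /imsetP [t' _ ->].
case: (eqVneq t t') => [-> | ne].
  have g1 : good (Cg (2 * j + 1)) by apply: good_C; lia.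
  have g2 : good (Cg (2 * k + 1)) by apply: good_C; lia.
  by rewrite (strong_irr g1 g2).
by have := pt_inj_indep ne; rewrite negb_or => /andP [].
Qed.

End Part6.


Lemma Cg_ordS n (i : 'I_n) : 2 < n -> Cg n i (ordS i).
Proof.
move=> n2; rewrite /Cg /= ?eqxx ?orbT ?andbT.
apply/eqP => /(congr1 val) /=.
have := ltn_ord i; case: (ltnP i.+1 n) => h1 h2.
  rewrite modn_small //; lia.
have -> : i.+1 = n by lia.
rewrite modnn; lia.
Qed.

Lemma part6_ub j k : 1 <= k -> k <= j ->
  alpha (strongP (Cg (2 * j + 1)) (Cg (2 * k + 1))) <= j * k + k %/ 2.
Proof.
move=> k1 kj; apply: alpha_le => I hI.
have m2 : 2 < 2 * j + 1 by lia.
suff : 2 * #|I| <= (2 * j + 1) * k by lia.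
rewrite (card_part fst) -dc.
rewrite -[X in _ <= X * k](card_ord (2 * j + 1)) -sum_nat_const.
apply: leq_sum => a _.
set Q := fun a' : 'I_(2 * j + 1) => (a' == a) || (a' == ordS a).
have na : a != ordS a.
  by apply/negP => /eqP h; have := Cg_ordS a m2; rewrite -h /Cg eqxx.
have -> : #|[set x in I | x.1 == a]| + #|[set x in I | x.1 == ordS a]|
          = #|[set x in I | Q x.1]|.
  rewrite -[RHS]addn0.
  have E : [set x in I | Q x.1] = [set x in I | x.1 == a] :|: [set x in I | x.1 == ordS a].
    by apply/setP => x; rewrite !inE /Q andb_orr.
  have E0 : [set x in I | x.1 == a] :&: [set x in I | x.1 == ordS a] = set0.
    apply/setP => x; rewrite !inE; apply/negP => /andP [/andP [_ /eqP h1] /andP [_ /eqP h2]].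
    by move/eqP: na; apply; rewrite -h2 h1.
  by rewrite E cardsU E0 cards0 subn0 addn0.
apply: leq_trans (strong_clique1 hI _) _.
  move=> x y; rewrite /Q => /orP [] /eqP -> /orP [] /eqP ->; try by left.
    by right; apply: Cg_ordS.
  by right; rewrite Cg_sym; apply: Cg_ordS.
have h3 : 2 < 2 * k + 1 by lia.
apply: leq_trans (alpha_C_le h3) _; lia.
Qed.

Lemma part6 j k : 1 <= k -> k <= j ->
  Ccc (strongP (Cg (2 * j + 1)) (Cg (2 * k + 1))) = j * k + k %/ 2.
Proof.
move=> k1 kj.
have m0 : 0 < 2 * j + 1 by lia. have n0 : 0 < 2 * k + 1 by lia.
have g1 : good (Cg (2 * j + 1)) by apply: good_C; lia.
have g2 : good (Cg (2 * k + 1)) by apply: good_C; lia.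
rewrite (Ccc_strong (Ordinal m0) (Ordinal n0) g1 g2).
apply: anti; first exact: part6_ub.
exact: part6_lb.
Qed.

Theorem mainTheorem15 :
  (* 1 *)
  (forall m n : nat, 2 <= m -> 2 <= n ->
     Ccc (strongP (Kg m) (Kg n)) = 1 /\ Ccc (lexP (Kg m) (Kg n)) = 1) /\
  (* 2 *)
  (forall m n : nat, 2 <= m -> 3 <= n ->
     Ccc (strongP (Kg m) (Cg n)) = n %/ 2 /\ Ccc (lexP (Kg m) (Cg n)) = n %/ 2) /\
  (* 3 *)
  (forall m n : nat, 2 <= m -> 2 <= n ->
     Ccc (strongP (Kg m) (Pg n)) = (n + 1) %/ 2 /\
     Ccc (lexP (Kg m) (Pg n)) = (n + 1) %/ 2) /\
  (* 4 *)
  (forall m n : nat, 3 <= m -> 3 <= n ->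
     Ccc (lexP (Cg m) (Cg n)) = (m %/ 2) * (n %/ 2)) /\
  (* 5 *)
  (forall j n : nat, 3 <= 2 * j -> 3 <= n ->
     Ccc (strongP (Cg (2 * j)) (Cg n)) = j * (n %/ 2)) /\
  (* 6 *)
  (forall j k : nat, 1 <= k -> k <= j ->
     Ccc (strongP (Cg (2 * j + 1)) (Cg (2 * k + 1))) = j * k + k %/ 2) /\
  (* 7 *)
  (forall m n : nat, 3 <= m -> 2 <= n ->
     Ccc (strongP (Cg m) (Pg n)) = (m %/ 2) * ((n + 1) %/ 2) /\
     Ccc (lexP (Cg m) (Pg n)) = (m %/ 2) * ((n + 1) %/ 2)) /\
  (* 8 *)
  (forall m n : nat, 2 <= m -> 2 <= n ->
     Ccc (strongP (Pg m) (Pg n)) = ((m + 1) %/ 2) * ((n + 1) %/ 2) /\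
     Ccc (lexP (Pg m) (Pg n)) = ((m + 1) %/ 2) * ((n + 1) %/ 2)).
Proof.
split; first exact: part1.
split; first exact: part2.
split; first exact: part3.
split; first exact: part4.
split; first exact: part5.
split; first exact: part6.
split; first exact: part7.
exact: part8.
Qed.
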